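(* Let $p$ be a prime and $M$ an $m'\times m$ matrix over $\mathbb{F}_p$. Let $1\le L\le p$ be an integer and $\mathbf{L}=(L_1,\dots,L_m)$ integers with $L\le L_i\le2L$. For $\mathbf{b}\in\mathbb{Z}^{m'}$ and $D\subseteq\mathbb{Z}^m$ set $S(\mathbf{b};D)=\{\mathbf{x}\in D: M\mathbf{x}\equiv\mathbf{b}\pmod p\}$. Then for every $\mathbf{N}\in\mathbb{Z}^m$ and every $\mathbf{b}$, $$|S(\mathbf{b};[\mathbf{N},\mathbf{N}+\mathbf{L}])|\le|S(\mathbf{0};[-\mathbf{L},\mathbf{L}])|,$$ and if $M$ has rank $\min\{m',m\}$ over $\mathbb{F}_p$, then $$|S(\mathbf{0};[-\mathbf{L},\mathbf{L}])|\ll_mL^{\dim\ker M},$$ where $\ker M$ is the kernel of $M$ acting on $\mathbb{F}_p^m$.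
   Context: $[\mathbf{N},\mathbf{N}+\mathbf{L}]=\prod_{i=1}^m\{x\in\mathbb{Z}:N_i\le x\le N_i+L_i\}$ and $[-\mathbf{L},\mathbf{L}]=\prod_{i=1}^m\{x\in\mathbb{Z}:-L_i\le x\le L_i\}$. *)

(* Defs.v *)
From HB Require Import structures.
From mathcomp Require Import all_boot all_order all_algebra.
Set Implicit Arguments. Unset Strict Implicit. Unset Printing Implicit Defensive.
Import Order.TTheory GRing.Theory Num.Theory.
Local Open Scope ring_scope.

Definition modp_vec (p k : nat) (x : 'cV[int]_k) : 'cV['F_p]_k :=
  map_mx (fun z : int => z%:~R) x.

(* |S(b; [lo, lo + w])| = #{ x in Z^m : lo_i <= x_i <= lo_i + w_i for all i,
                                        M x = b (mod p) }.
   The box is enumerated by offsets y with 0 <= y_i <= w_i (x = lo + y);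
   offsets are stored in 'I_W with W := 1 + max_i w_i, which is large enough. *)
Definition boxcount (p m' m : nat) (M : 'M['F_p]_(m', m)) (b : 'cV[int]_m')
    (lo : 'cV[int]_m) (w : 'I_m -> nat) : nat :=
  #|[set y : {ffun 'I_m -> 'I_((\max_(i < m) w i).+1)} |
      [forall i, (y i <= w i)%N] &&
      (M *m modp_vec p (\col_i (lo i 0 + (y i : nat)%:Z)) == modp_vec p b)]|.

(* dim ker M, where ker M = { x in F_p^m : M x = 0 }.  kermx A is the left
   kernel {u : u *m A = 0}, so ker M (acting on columns) is kermx M^T. *)
Definition dimker (p m' m : nat) (M : 'M['F_p]_(m', m)) : nat :=
  \rank (kermx M^T).

(* Main.v *)
Require Import Defs.
From HB Require Import structures.
From mathcomp Require Import all_boot all_order all_algebra.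
From mathcomp Require Import zify.
Import Order.TTheory GRing.Theory Num.Theory.
Local Open Scope ring_scope.

Lemma modpB p k (a c : 'cV[int]_k) :
  modp_vec p (a - c) = modp_vec p a - modp_vec p c.
Proof. by apply/matrixP => i j; rewrite !mxE intrB. Qed.

Lemma modp0 p k : modp_vec p (0 : 'cV[int]_k) = 0.
Proof. by apply/matrixP => i j; rewrite !mxE. Qed.

Lemma part1 p m' m (M : 'M['F_p]_(m', m)) (Lv : 'I_m -> nat)
  (N : 'cV[int]_m) (b : 'cV[int]_m') :
  (boxcount M b N Lv <= boxcount M 0 (\col_i (- (Lv i)%:Z)) (fun i => (2 * Lv i)%N))%N.
Proof.
rewrite /boxcount.
set S := [set y | _]. set T := [set y | _].
have [->|[y0 Hy0]] := set_0Vmem S; first by rewrite cards0.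
move: (Hy0); rewrite inE => /andP[/forallP Hb0 /eqP E0].
pose h (y : {ffun 'I_m -> 'I_((\max_(i<m) Lv i).+1)}) :
  {ffun 'I_m -> 'I_((\max_(i<m) (2 * Lv i)%N).+1)} :=
  [ffun i => inord (y i + Lv i - y0 i)].
have hv (y : {ffun 'I_m -> 'I_((\max_(i<m) Lv i).+1)}) i : (y i <= Lv i)%N -> (h y i : nat) = (y i + Lv i - y0 i)%N.
  move=> Hy; rewrite ffunE inordK // ltnS.
  apply: (leq_trans _ (leq_bigmax (F := fun i => (2 * Lv i)%N) i)).
  have := Hb0 i; lia.
rewrite -(card_in_imset (f := h)); last first.
  move=> y y'; rewrite !inE => /andP[/forallP Hb _] /andP[/forallP Hb' _] E.
  apply/ffunP => i; apply/val_inj.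
  move/ffunP: E => /(_ i) /(congr1 val); rewrite /= hv // hv //.
  by rewrite -!addnBA //; apply: addIn.
apply: subset_leq_card; apply/subsetP => _ /imsetP[y Hy ->].
move: Hy; rewrite inE => /andP[/forallP Hb /eqP E].
rewrite inE; apply/andP; split.
  apply/forallP => i; rewrite hv //; have := Hb0 i; have := Hb i.
  move: (y i : nat) (y0 i : nat) (Lv i) => a c d; lia.
have -> : (\col_i ((\col_i0 - (Lv i0)%:Z) i 0 + (h y i : nat)%:Z) : 'cV[int]_m)
   = (\col_i (N i 0 + (y i : nat)%:Z)) - (\col_i (N i 0 + (y0 i : nat)%:Z)).
  apply/matrixP => i j; rewrite !mxE hv //; have := Hb0 i; have := Hb i; move: (y i : nat) (y0 i : nat) (Lv i) (N i 0) => a c d e; lia.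
by rewrite modpB mulmxBr E E0 subrr modp0.
Qed.

Lemma key p m' m (M : 'M['F_p]_(m', m)) (z : 'cV['F_p]_m) :
  M *m z = 0 -> (forall i, i \notin (maxrankfun M^T) @: setT -> z i 0 = 0) -> z = 0.
Proof.
set f := maxrankfun M^T => Mz Hz.
have Hfree := maxrowsub_free M^T.
pose u : 'rV_(\rank M^T) := \row_k z (f k) 0.
have : u *m rowsub f M^T = 0.
  apply/rowP => j; rewrite !mxE.
  have E := congr1 (fun A : 'cV__ => A j 0) Mz; rewrite !mxE /= in E.
  rewrite -[RHS]E.
  rewrite [RHS](bigID (mem (f @: setT))) /=.
  rewrite [X in _ = _ + X]big1; last by move=> i /Hz ->; rewrite mulr0.
  rewrite addr0 big_imset /=; last by move=> a b _ _; apply: maxrankfun_inj.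
  by apply: eq_big => [k|k _]; rewrite ?inE // !mxE mulrC.
move/eqP; rewrite mulmx_free_eq0 // => /eqP u0.
apply/matrixP => i j; rewrite (ord1 j) mxE.
case: (boolP (i \in f @: setT)) => [/imsetP[k _ ->]|/Hz //].
by have := congr1 (fun A : 'rV__ => A 0 k) u0; rewrite !mxE.
Qed.

Lemma card_below W c : (#|[pred k : 'I_W | (k < c)%N]| <= c)%N.
Proof.
rewrite cardE -(size_map val) -[X in (_ <= X)%N](size_iota 0 c).
apply: uniq_leq_size; first by rewrite map_inj_uniq ?enum_uniq //; exact: val_inj.
by move=> x /mapP[k]; rewrite mem_enum inE => Hk ->; rewrite mem_iota.
Qed.

Lemma nat_modp p a b : prime p -> (a%:R : 'F_p) = b%:R -> (a %% p = b %% p)%N.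
Proof.
move=> pp.
have H : forall a b, (b <= a)%N -> (a%:R : 'F_p) = b%:R -> (a %% p = b %% p)%N.
  move=> {}a {}b ba /eqP; rewrite -subr_eq0 -natrB // -(dvdn_pcharf (pchar_Fp pp)) => H.
  by apply/eqP; rewrite eqn_mod_dvd.
case: (leqP b a) => [|/ltnW] h E; first exact: H.
by apply/esym/H.
Qed.

Lemma part2 p m' m (M : 'M['F_p]_(m', m)) (L : nat) (Lv : 'I_m -> nat) :
  prime p -> (1 <= L <= p)%N -> (forall i, L <= Lv i <= 2 * L)%N ->
  (boxcount M 0 (\col_i (- (Lv i)%:Z)) (fun i => (2 * Lv i)%N)
     <= 5 ^ m * L ^ dimker M)%N.
Proof.
move=> pp /andP[L1 Lp] HLv.
have p0 : (0 < p)%N by exact: prime_gt0.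
rewrite /boxcount /dimker mxrank_ker.
set S := [set y | _].
set f := maxrankfun M^T.
set FS := f @: setT.
pose g (y : {ffun 'I_m -> 'I_((\max_(i<m) (2 * Lv i)%N).+1)}) :
   {ffun 'I_m -> 'I_((\max_(i<m) (2 * Lv i)%N).+1)} :=
  [ffun i => if i \in FS then inord (y i %/ p) else y i].
pose c i := if i \in FS then 5%N else (4 * L).+1.
pose F := fun i : 'I_m => [pred k : 'I_((\max_(i<m) (2 * Lv i)%N).+1) | (k < c i)%N].
rewrite -(card_in_imset (f := g)); last first.
  move=> y y'; rewrite !inE => /andP[/forallP Hb /eqP E] /andP[/forallP Hb' /eqP E'] Eg.
  pose z := modp_vec p ((\col_i ((\col_i0 - (Lv i0)%:Z) i 0 + (y i : nat)%:Z))
                      - (\col_i ((\col_i0 - (Lv i0)%:Z) i 0 + (y' i : nat)%:Z))).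
  have Ez : forall i, z i 0 = (y i : nat)%:R - (y' i : nat)%:R.
    move=> i; rewrite !mxE.
    have -> : forall a b c : int, ((a + b) - (a + c)) = b - c by move=> *; lia.
    by rewrite intrB.
  have z0 : z = 0.
    apply: (@key p m' m M).
      by rewrite /z modpB mulmxBr E E' subrr.
    move=> i Hi; rewrite Ez.
    move/ffunP: Eg => /(_ i); rewrite !ffunE (negPf Hi) => ->.
    by rewrite subrr.
  apply/ffunP => i; apply/val_inj.
  case: (boolP (i \in FS)) => Hi; last first.
    by move/ffunP: Eg => /(_ i); rewrite !ffunE (negPf Hi) => ->.
  move/ffunP: Eg => /(_ i); rewrite !ffunE Hi => /(congr1 val).
  rewrite /= !inordK; try by apply: leq_ltn_trans (leq_div _ _) (ltn_ord _).
  move=> Ed.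
  have : z i 0 = 0 by rewrite z0 mxE.
  rewrite Ez => /eqP; rewrite subr_eq0 => /eqP /(@nat_modp p _ _ pp) Em.
  by rewrite (divn_eq (y i) p) (divn_eq (y' i) p) Ed Em.
apply: (@leq_trans #|family F|).
  apply: subset_leq_card; apply/subsetP => _ /imsetP[y Hy ->].
  move: Hy; rewrite inE => /andP[/forallP Hb _].
  apply/familyP => i; rewrite /F inE ffunE /c.
  have := Hb i; have := HLv i.
  case: ifP => _.
    rewrite inordK; last by apply: leq_ltn_trans (leq_div _ _) (ltn_ord _).
    rewrite ltn_divLR //; move: (y i : nat) => a; lia.
  move: (y i : nat) => a; lia.
rewrite card_family foldrE big_image /=.
apply: (@leq_trans (\prod_i (5 * (if i \in ~: FS then L else 1))%N)).
  apply: leq_prod => i _; apply: leq_trans (card_below _ _) _.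
  rewrite /c inE; case: ifP => _ /=; lia.
rewrite big_split /= -big_mkcond /= !prod_nat_const card_ord.
rewrite leq_mul2l; apply/orP; right.
have Hc : (#|FS| + #|~: FS| = m)%N by rewrite cardsC card_ord.
move: Hc; rewrite card_imset; last exact: maxrankfun_inj.
rewrite cardsT card_ord => Hc.
have -> : (m - \rank M^T = #|~: FS|)%N by move: Hc; move: (#|~: FS|) (\rank M^T) => a b; lia.
by [].
Qed.

Theorem lemma4p1 (m : nat) :
  (forall (p m' : nat) (M : 'M['F_p]_(m', m)) (L : nat) (Lv : 'I_m -> nat),
     prime p -> (1 <= L <= p)%N -> (forall i, L <= Lv i <= 2 * L)%N ->
     forall (N : 'cV[int]_m) (b : 'cV[int]_m'),
       (boxcount M b N Lv
         <= boxcount M 0 (\col_i (- (Lv i)%:Z)) (fun i => 2 * Lv i))%N)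
  /\
  (exists C : nat,
     forall (p m' : nat) (M : 'M['F_p]_(m', m)) (L : nat) (Lv : 'I_m -> nat),
       prime p -> (1 <= L <= p)%N -> (forall i, L <= Lv i <= 2 * L)%N ->
       \rank M = minn m' m ->
       (boxcount M 0 (\col_i (- (Lv i)%:Z)) (fun i => 2 * Lv i)
         <= C * L ^ dimker M)%N).
Proof.
split.
  by move=> p m' M L Lv _ _ _ N b; exact: part1.
exists (5 ^ m)%N => p m' M L Lv pp HL HLv _.
exact: part2.
Qed.
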